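(* Let $S=(N,M_0)$ be a non-trivial, strongly connected H1S-WMG$_\le$ system with incidence matrix $I$, such that deleting the shared place (if any) yields a strongly connected WMG$_\le$. Then $S$ is live if and only if there is no pair $(M,Y)$ with $M\in\mathbb{N}^P$, $Y\in\mathbb{N}^T$, $M=M_0+I\cdot Y$, such that $M$ enables no transition of $N$.
   Context: A Petri net is $N=(P,T,W)$ with finite disjoint sets $P$, $T$ and weights $W:(P\times T)\cup(T\times P)\to\mathbb{N}$; incidence matrix $I(p,t)=W(t,p)-W(p,t)$. Non-trivial means $P$ and $T$ are non-empty. Strongly connected means the bipartite directed graph with vertices $P\cup T$ and an arc $(x,y)$ whenever $W(x,y)>0$ is strongly connected. Transition $t$ is enabled at $M$ if $M(p)\ge W(p,t)$ for all $p$; firing yields $M+I[\cdot,t]$. A system is live if for every transition $t$ and every reachable marking $M'$ some marking reachable from $M'$ enables $t$. A place is shared if it has at least two output transitions; the net is homogeneous if for each place all its output weights are equal. An H1S-WMG$_\le$ is a homogeneous net with at most one shared place such that deleting the shared place (if any) and its adjacent arcs (keeping all transitions) yields a WMG$_\le$, i.e. a net in which every place has at most one input and at most one output transition. *)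

(* Defs.v *)
From mathcomp Require Import all_boot all_order all_algebra.
Set Implicit Arguments. Unset Strict Implicit. Unset Printing Implicit Defensive.
Import GRing.Theory Num.Theory.

(* A Petri net N = (P, T, W): places P and transitions T are finite types;
   W is split into Wpre p t = W(p,t) and Wpost t p = W(t,p). *)
Section PetriNet.
Variables (P T : finType) (Wpre : P -> T -> nat) (Wpost : T -> P -> nat).

Definition incidence (p : P) (t : T) : int := (Wpost t p)%:Z - (Wpre p t)%:Z.

Definition nontrivial : Prop := 0 < #|P| /\ 0 < #|T|.

Definition net_arc (keep : pred P) : rel (P + T) := fun x y =>
  match x, y with
  | inl p, inr t => keep p && (0 < Wpre p t)
  | inr t, inl p => keep p && (0 < Wpost t p)
  | _, _ => false
  end.

Definition kept_vertex (keep : pred P) (x : P + T) : bool :=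
  match x with inl p => keep p | inr _ => true end.

Definition strongly_connected_on (keep : pred P) : Prop :=
  forall x y : P + T, kept_vertex keep x -> kept_vertex keep y ->
    connect (net_arc keep) x y.

Definition strongly_connected : Prop := strongly_connected_on predT.

Definition outputs (p : P) : {set T} := [set t | 0 < Wpre p t].
Definition inputs (p : P) : {set T} := [set t | 0 < Wpost t p].

Definition shared (p : P) : bool := 1 < #|outputs p|.

Definition homogeneous : Prop :=
  forall p t1 t2, t1 \in outputs p -> t2 \in outputs p -> Wpre p t1 = Wpre p t2.

(* Deleting the shared place (if any) yields a WMG_<=: every non-shared place
   has at most one input and at most one output transition. *)
Definition H1S_WMG_le : Prop :=
  [/\ homogeneous,
      #|[set p | shared p]| <= 1 &
      forall p, ~~ shared p -> (#|inputs p| <= 1) && (#|outputs p| <= 1)].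

Definition enabled (M : P -> nat) (t : T) : bool := [forall p, Wpre p t <= M p].

Definition fire (M : P -> nat) (t : T) : P -> nat :=
  fun p => M p - Wpre p t + Wpost t p.

Inductive reachable (M : P -> nat) : (P -> nat) -> Prop :=
  | reach_refl : reachable M M
  | reach_step : forall M' t, reachable M M' -> enabled M' t ->
                 reachable M (fire M' t).

Definition live (M0 : P -> nat) : Prop :=
  forall t M', reachable M0 M' -> exists2 M'', reachable M' M'' & enabled M'' t.

End PetriNet.

(* Main.v *)
Require Import Defs.
From mathcomp Require Import all_boot all_order all_algebra.
Import GRing.Theory Num.Theory.
From mathcomp Require Import zify.
From Stdlib Require Import Classical.
Set Implicit Arguments.
Inductive reachX (P T : finType) (Wpre : P -> T -> nat) (Wpost : T -> P -> nat)
   (M : P -> nat) : (P -> nat) -> (T -> nat) -> Prop :=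
  | rX_refl : reachX P T Wpre Wpost M M (fun _ => 0)
  | rX_step : forall M' X t, reachX P T Wpre Wpost M M' X -> enabled Wpre M' t ->
       reachX P T Wpre Wpost M (fire Wpre Wpost M' t) (fun x => X x + (x == t)).
Arguments reachX {P T}.

Lemma sum_delta (T : finType) (f X : T -> nat) t :
  \sum_y f y * (X y + (y == t)) = \sum_y f y * X y + f t.
Proof.
under eq_bigr do rewrite mulnDr.
rewrite big_split /=; congr (_ + _).
rewrite (bigD1 t) //= eqxx muln1 big1 ?addn0 // => y /negbTE ->; by rewrite muln0.
Qed.

Lemma sum_delta1 (T : finType) (X : T -> nat) t :
  \sum_y (X y + (y == t)) = \sum_y X y + 1.
Proof.
have := @sum_delta T (fun _ => 1) X t.
by under eq_bigr do rewrite mul1n; under [\sum_y 1 * X y]eq_bigr do rewrite mul1n.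
Qed.

Lemma reachX_eq (P T : finType) Wpre Wpost (M M' : P -> nat) (X : T -> nat) :
  reachX Wpre Wpost M M' X -> forall p,
  M' p + \sum_t Wpre p t * X t = M p + \sum_t Wpost t p * X t.
Proof.
elim => [|M1 X1 t _ IH en] p; first by rewrite !big1 ?addn0 // => t _; rewrite muln0.
rewrite !sum_delta /fire.
move/forallP: en => /(_ p) en.
have := IH p; lia.
Qed.

Lemma reachX_reachable (P T : finType) Wpre Wpost (M M' : P -> nat) (X : T -> nat) :
  reachX Wpre Wpost M M' X -> reachable Wpre Wpost M M'.
Proof. by elim => *; [constructor | econstructor]. Qed.

Lemma reachable_reachX (P T : finType) (Wpre : P -> T -> nat) Wpost (M M' : P -> nat) :
  reachable Wpre Wpost M M' -> exists X, reachX Wpre Wpost M M' X.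
Proof. elim => [|M1 t _ [X HX] en]; eexists; econstructor; eauto. Qed.

Lemma reachable_trans (P T : finType) (Wpre : P -> T -> nat) Wpost (A B C : P -> nat) :
  reachable Wpre Wpost A B -> reachable Wpre Wpost B C -> reachable Wpre Wpost A C.
Proof. move=> HAB; elim => // M1 t _ IH en; econstructor; eauto. Qed.

Lemma dead_set (P T : finType) (Wpre : P -> T -> nat) Wpost (D : pred T) (M1 : P -> nat) :
  (forall u, D u -> exists p, M1 p < Wpre p u /\ forall t, 0 < Wpost t p -> D t) ->
  forall M', reachable Wpre Wpost M1 M' ->
  forall u, D u -> exists p, M' p < Wpre p u /\ forall t, 0 < Wpost t p -> D t.
Proof.
move=> H0 M'; elim => // M2 t _ IH en u Du.
have Dt : ~~ D t.
  apply/negP => Dt; have [p [lt _]] := IH t Dt.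
  by move/forallP: en => /(_ p); rewrite leqNgt lt.
have [p [lt Hp]] := IH u Du.
exists p; split => //.
have W0 : Wpost t p = 0.
  case: (posnP (Wpost t p)) => // /Hp Dt'; by rewrite Dt' in Dt.
rewrite /fire W0 addn0; lia.
Qed.
Lemma fire_max (P T : finType) (Wpre : P -> T -> nat) (Wpost : T -> P -> nat) n :
  forall (Y : T -> nat) (M0 M : P -> nat), \sum_t Y t <= n ->
  (forall p, M p + \sum_t Wpre p t * Y t = M0 p + \sum_t Wpost t p * Y t) ->
  exists M1 Z, [/\ reachable Wpre Wpost M0 M1,
    (forall p, M p + \sum_t Wpre p t * Z t = M1 p + \sum_t Wpost t p * Z t) &
    (forall u, 0 < Z u -> ~~ enabled Wpre M1 u)].
Proof.
elim: n => [|n IH] Y M0 M hs heq.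
  exists M0, Y; split => //; first by constructor.
  move=> u Yu; exfalso.
  have : Y u <= \sum_t Y t by rewrite (bigD1 u) //= leq_addr.
  lia.
case: (boolP [exists u, (0 < Y u) && enabled Wpre M0 u]).
  case/existsP => u /andP [Yu en].
  pose Y' := fun x => Y x - (x == u).
  have HY : forall x, Y' x + (x == u) = Y x.
    by move=> x; rewrite /Y'; case: eqP => [->|]; lia.
  have HS : forall f : T -> nat, \sum_t f t * Y t = \sum_t f t * Y' t + f u.
    by move=> f; rewrite -sum_delta; apply: eq_bigr => x _; rewrite HY.
  have hs' : \sum_t Y' t <= n.
    have := HS (fun _ => 1); under eq_bigr do rewrite mul1n.
    under [\sum_t 1 * Y' t]eq_bigr do rewrite mul1n. lia.
  have heq' : forall p, M p + \sum_t Wpre p t * Y' t =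
      fire Wpre Wpost M0 u p + \sum_t Wpost t p * Y' t.
    move=> p; have := heq p; rewrite !HS /fire.
    move/forallP: en => /(_ p); lia.
  have [M1 [Z [r1 e1 d1]]] := IH Y' (fire Wpre Wpost M0 u) M hs' heq'.
  exists M1, Z; split => //.
  apply: reachable_trans r1; econstructor; [constructor | exact en].
rewrite negb_exists => /forallP H.
exists M0, Y; split => //; first by constructor.
by move=> u Yu; have := H u; rewrite Yu.
Qed.
Lemma card_le1_eq (T : finType) (A : {set T}) x y :
  #|A| <= 1 -> x \in A -> y \in A -> x = y.
Proof. by move/card_le1_eqP => H xA yA; apply: H. Qed.

Lemma blocked (P T : finType) (Wpre : P -> T -> nat) M t :
  ~~ enabled Wpre M t -> exists p, M p < Wpre p t.
Proof. by rewrite /enabled negb_forall => /existsP [p]; rewrite -ltnNge; exists p. Qed.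
Arguments blocked {P T Wpre M t}.

Lemma sum_single (T : finType) (f Z : T -> nat) t :
  (forall y, 0 < f y -> y = t) -> Z t = 0 -> \sum_y f y * Z y = 0.
Proof.
move=> H Zt; apply: big1 => y _; case: (posnP (f y)) => [->//|/H ->]; by rewrite Zt muln0.
Qed.

Lemma sum_ge (T : finType) (f : T -> nat) u : f u <= \sum_y f y.
Proof. by rewrite (bigD1 u) //= leq_addr. Qed.

Lemma live_no_dead (P T : finType) (Wpre : P -> T -> nat) (Wpost : T -> P -> nat) M0 :
  H1S_WMG_le Wpre Wpost -> live Wpre Wpost M0 ->
  forall M Y, (forall p, M p + \sum_t Wpre p t * Y t = M0 p + \sum_t Wpost t p * Y t) ->
  (forall t, ~~ enabled Wpre M t) -> (exists t : T, true) -> False.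
Proof.
move=> [hom hS hW] hlive M Y heq dM [t0 _].
have [M1 [Z [r1 e1 d1]]] := @fire_max P T Wpre Wpost _ Y M0 M (leqnn _) heq.
suff [D [[u Du] HD]] : exists D : pred T, (exists u, D u) /\
    (forall u, D u -> exists p, M1 p < Wpre p u /\ forall t, 0 < Wpost t p -> D t).
  have [M'' r'' en''] := hlive u M1 r1.
  have [p [lt _]] := dead_set D HD r'' u Du.
  by move/forallP: en'' => /(_ p); rewrite leqNgt lt.
case: (boolP [exists s, [exists u0, shared Wpre s && (M1 s < Wpre s u0)]]).
  case/existsP => s /existsP [u0 /andP [ss lts]].
  exists predT; split; first by exists t0.
  move=> t _; suff [p lt] : exists p, M1 p < Wpre p t by exists p.
  case: (posnP (Z t)) => [Zt|/d1/blocked //].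
  have [p ltp] := blocked (dM t).
  case: (boolP (shared Wpre p)) => sp.
    have eps : p = s by apply: card_le1_eq hS _ _; rewrite inE.
    subst p; exists s.
    rewrite (hom s t u0) ?inE //; lia.
  exists p.
  have o1 : #|outputs Wpre p| <= 1 by move: sp; rewrite /shared; lia.
  have H0 : \sum_y Wpre p y * Z y = 0.
    apply: sum_single Zt => y hy; apply: card_le1_eq o1 _ _; rewrite inE //; lia.
  have := e1 p; rewrite H0; lia.
rewrite negb_exists => /forallP hB.
have hB' : forall s u, shared Wpre s -> Wpre s u <= M1 s.
  move=> s u ss; have := hB s; rewrite negb_exists => /forallP /(_ u).
  by rewrite ss /= -leqNgt.
case: (boolP [exists u, 0 < Z u]).
  case/existsP => u Zu.
  exists (fun u => 0 < Z u); split; first by exists u.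
  move=> v Zv; have [p ltp] := blocked (d1 v Zv).
  exists p; split => // t wt.
  have sp : ~~ shared Wpre p.
    by apply/negP => /(hB' p v); lia.
  have /andP [i1 _] := hW p sp.
  case: (posnP (Z t)) => // Zt.
  have H0 : \sum_x Wpost x p * Z x = 0.
    apply: sum_single Zt => y hy; apply: card_le1_eq i1 _ _; rewrite inE //; lia.
  have := e1 p; rewrite H0.
  have := @sum_ge T (fun y => Wpre p y * Z y) v.
  move=> /= h1; have h2 : Wpre p v <= Wpre p v * Z v by rewrite leq_pmulr.
  lia.
rewrite negb_exists => /forallP hZ.
exists predT; split; first by exists t0.
move=> t _; have [p ltp] := blocked (dM t); exists p; split => //.
have Z0 : forall f : T -> nat, \sum_y f y * Z y = 0.
  move=> f; apply: big1 => y _; have := hZ y; rewrite lt0n negbK => /eqP ->.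
  by rewrite muln0.
have := e1 p; rewrite !Z0; lia.
Qed.
Lemma no_dead_live (P T : finType) (Wpre : P -> T -> nat) (Wpost : T -> P -> nat) M0 :
  H1S_WMG_le Wpre Wpost ->
  (forall x y, kept_vertex (fun p => ~~ shared Wpre p) x ->
     kept_vertex (fun p => ~~ shared Wpre p) y ->
     connect (net_arc Wpre Wpost (fun p => ~~ shared Wpre p)) x y) ->
  (forall M X, reachX Wpre Wpost M0 M X -> (forall t, ~~ enabled Wpre M t) -> False) ->
  live Wpre Wpost M0.
Proof.
move=> [hom hS hW] hSC hND t M' r'.
destruct (classic (exists2 M'', reachable Wpre Wpost M' M'' & enabled Wpre M'' t))
  as [h|h]; first exact h.
exfalso.
have Hdead : forall M'', reachable Wpre Wpost M' M'' -> ~~ enabled Wpre M'' t.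
  by move=> M'' r; apply/negP => en; apply: h; exists M''.
have Xt0 : forall M'' X, reachX Wpre Wpost M' M'' X -> X t = 0.
  move=> M'' X; elim => // M2 X2 t' r2 IH en.
  rewrite IH; case: eqP => // e; subst t'.
  by have := Hdead _ (reachX_reachable r2); rewrite en.
pose keep := fun p => ~~ shared Wpre p.
pose Q (x : P + T) : Prop := match x with
  | inr u => exists b, forall M'' X, reachX Wpre Wpost M' M'' X -> X u <= b
  | inl p => exists b, forall M'' X, reachX Wpre Wpost M' M'' X ->
        \sum_x Wpost x p * X x <= b end.
have step : forall x y, net_arc Wpre Wpost keep x y -> Q x -> Q y.
  case=> [p|u] [p'|v] //=.
    move=> /andP [kp wp] [b Hb]; exists (M' p + b) => M'' X r.
    have := reachX_eq r p; have := Hb _ _ r.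
    have := @sum_ge T (fun y => Wpre p y * X y) v => /= h1.
    have h2 : X v <= Wpre p v * X v by rewrite leq_pmull.
    lia.
  move=> /andP [kp wp] [b Hb]; exists (Wpost u p' * b) => M'' X r.
  have /andP [i1 _] := hW p' kp.
  have -> : \sum_x Wpost x p' * X x = Wpost u p' * X u.
    rewrite (bigD1 u) //= big1 ?addn0 // => y yu.
    case: (posnP (Wpost y p')) => [->//|hy].
    have e : y = u by apply: card_le1_eq i1 _ _; rewrite inE.
    by rewrite e eqxx in yu.
  by rewrite leq_mul2l (Hb _ _ r) orbT.
have Qall : forall u, Q (inr u).
  move=> u; have /connectP [s pth ->] := hSC (inr t) (inr u) isT isT.
  elim: s (inr t : P + T) pth {u} (ex_intro _ 0 (fun M'' X r => eq_leq (Xt0 M'' X r)) : Q (inr t)) => [|z s IH] x //=.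
  by move=> /andP [axz pth] Qx; apply: IH pth (step _ _ axz Qx).
have [B HB] : exists B, forall M'' X, reachX Wpre Wpost M' M'' X ->
    \sum_(u <- index_enum T) X u <= B.
  elim: (index_enum T) => [|a r [B HB]].
    by exists 0 => M'' X _; rewrite big_nil.
  have [b Hb] := Qall a.
  exists (b + B) => M'' X rx; rewrite big_cons.
  by apply: leq_add; [apply: Hb rx | apply: HB rx].
have dl : forall k M'' X, reachX Wpre Wpost M' M'' X -> B - \sum_u X u <= k ->
    exists Md Xd, reachX Wpre Wpost M' Md Xd /\ forall u, ~~ enabled Wpre Md u.
  elim=> [|k IH] M'' X rx hk.
    case: (boolP [exists u, enabled Wpre M'' u]).
      case/existsP => u en.
      have := HB _ _ (rX_step u rx en); rewrite sum_delta1.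
      have := HB _ _ rx; lia.
    by rewrite negb_exists => /forallP hd; exists M'', X.
  case: (boolP [exists u, enabled Wpre M'' u]).
    case/existsP => u en.
    apply: IH (rX_step u rx en) _; rewrite sum_delta1.
    have := HB _ _ (rX_step u rx en); rewrite sum_delta1; lia.
  by rewrite negb_exists => /forallP hd; exists M'', X.
have [Md [Xd [rd dd]]] := dl _ _ _ (@rX_refl P T Wpre Wpost M') (leqnn _).
have [X0 rx0] := reachable_reachX (reachable_trans r' (reachX_reachable rd)).
exact: hND _ _ rx0 dd.
Qed.

Unset Implicit Arguments.
Local Open Scope ring_scope.

Lemma int_eq_nat (P T : finType) (Wpre : P -> T -> nat)
    (Wpost : T -> P -> nat) (M0 M : P -> nat) (Y : T -> nat) p :
  ((M p)%:Z = (M0 p)%:Z + \sum_(t : T) incidence Wpre Wpost p t * (Y t)%:Z) <->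
  (M p + \sum_t Wpre p t * Y t = M0 p + \sum_t Wpost t p * Y t)%N.
Proof.
have E : (\sum_(t : T) incidence Wpre Wpost p t * (Y t)%:Z) =
   ((\sum_t Wpost t p * Y t)%N%:Z - (\sum_t Wpre p t * Y t)%N%:Z).
  rewrite !(big_morph Posz PoszD (erefl 0%:Z)) -sumrB.
  by apply: eq_bigr => t _; rewrite /incidence mulrBl !PoszM.
rewrite E; set a := (\sum_t _)%N; set b := (\sum_t _)%N.
split => H; lia.
Qed.

Theorem mainTheorem7 (P T : finType) (Wpre : P -> T -> nat)
    (Wpost : T -> P -> nat) (M0 : P -> nat) :
  nontrivial P T ->
  strongly_connected Wpre Wpost ->
  H1S_WMG_le Wpre Wpost ->
  (forall s : P, shared Wpre s -> strongly_connected_on Wpre Wpost (predC1 s)) ->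
  live Wpre Wpost M0 <->
  ~ (exists (M : P -> nat) (Y : T -> nat),
       (forall p, (M p)%:Z = (M0 p)%:Z + \sum_(t : T) incidence Wpre Wpost p t * (Y t)%:Z)
       /\ (forall t, ~~ enabled Wpre M t)).
Proof.
move=> [_ hT] hSC hH hSs.
have ex : exists t : T, true.
  by case/card_gt0P: hT => t _; exists t.
have hH' := hH; case: hH' => [hom hS hW].
split.
  move=> hlive [M [Y [heqZ dM]]].
  apply: (@live_no_dead P T Wpre Wpost M0 hH hlive M Y _ dM ex) => p.
  exact/int_eq_nat.
move=> hno; apply: (no_dead_live hH).
  case: (boolP [exists s, shared Wpre s]).
    case/existsP => s ss.
    have K : forall p, (p != s) = ~~ shared Wpre p.
      move=> p; case: (boolP (shared Wpre p)) => sp.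
        by rewrite (card_le1_eq hS (x:=p) (y:=s)) ?inE ?eqxx.
      by apply/negP => /eqP e; rewrite e ss in sp.
    have E : net_arc Wpre Wpost (predC1 s) =2 net_arc Wpre Wpost (fun p => ~~ shared Wpre p).
      by move=> [p|u] [p'|v] //=; rewrite K.
    move=> x y kx ky; rewrite -(eq_connect E); apply: hSs => //.
      by case: x kx => //= p; rewrite K.
    by case: y ky => //= p; rewrite K.
  rewrite negb_exists => /forallP K.
  have E : net_arc Wpre Wpost predT =2 net_arc Wpre Wpost (fun p => ~~ shared Wpre p).
    by move=> [p|u] [p'|v] //=; rewrite K.
  move=> x y _ _; rewrite -(eq_connect E); apply: hSC; by case: x; case: y.
move=> M X rx dd; apply: hno; exists M, X; split => // p.
exact/int_eq_nat/(reachX_eq rx).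
Qed.
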